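(* Assume Conditions A and B, and suppose $a$ and $b$ are natural boundaries. Let $c_0(a),c_0(b)\in[0,\infty]$ be the boundary limits of $c_0$. Then $\lim_{y\to a}\frac{g_0(z)-g_0(y)}{\zeta(z)-\zeta(y)}=c_0(a)$ for all $z\in\mathcal I$; $\lim_{z\to b}\frac{g_0(z)-g_0(y)}{\zeta(z)-\zeta(y)}=c_0(b)$ for all $y\in\mathcal I$; $\lim_{(y,z)\to(a,a),\,y<z}\frac{g_0(z)-g_0(y)}{\zeta(z)-\zeta(y)}=c_0(a)$ and $\lim_{(y,z)\to(b,b),\,y<z}\frac{g_0(z)-g_0(y)}{\zeta(z)-\zeta(y)}=c_0(b)$; $\lim_{y\to a}g_0(y)/\zeta(y)=c_0(a)$ and $\lim_{z\to b}g_0(z)/\zeta(z)=c_0(b)$. In particular $\lim_{y\to a}g_0(y)=-\infty$ when $c_0(a)>0$ and $\lim_{z\to b}g_0(z)=\infty$ when $c_0(b)>0$.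
   Context: Setting. Let $\mathcal I=(a,b)$ with $-\infty\le a<b\le\infty$, let $\mu,\sigma:\mathcal I\to\mathbb R$ be continuous with $\sigma(x)\neq0$ on $\mathcal I$, and let $X_0$ be the regular diffusion $dX_0(t)=\mu(X_0(t))\,dt+\sigma(X_0(t))\,dW(t)$, $X_0(0)=x_0\in\mathcal I$. Scale density $s(x)=\exp(-\int^x 2\mu/\sigma^2)$, scale function $S(x)=\int^x s$, scale measure $S[y,z]=S(z)-S(y)$ ($dS$), speed density $m=1/(\sigma^2 s)$, speed measure $M[y,z]=\int_y^z m$ ($dM$). Boundaries are classified in Feller's sense; $a$ is attainable iff regular or exit. Condition A: $S(a,x]<\infty$ for $x\in\mathcal I$ and $S[x,b)=\infty$ (so $a$ is regular, exit or natural, $b$ is natural or entrance); if $a$ is reflecting then $\lim_{x\to a}s(x)M[x,b)<\infty$; if $b$ is natural then $M[y,b)<\infty$ for $y\in\mathcal I$; infinite boundaries are natural. State space $\mathcal E$: $\mathcal I$ with $a$ added if $a$ is attainable and $b$ added if $b$ is entrance. Condition B: (a) $c_0:\mathcal E\to[0,\infty)$ is continuous; if $a$ (resp. $b$) is natural, $c_0(a):=\lim_{x\to a}c_0(x)$ (resp. $c_0(b):=\lim_{x\to b}c_0(x)$) exists in $[0,\infty]$, with $c_0(-\infty)=\infty$ if $a=-\infty$ and $c_0(\infty)=\infty$ if $b=\infty$; $\int_y^b c_0\,dM<\infty$ for every $y\in\mathcal I$; if $a$ is reflecting, $\lim_{x\to a}s(x)\int_x^b c_0\,dM<\infty$. (b)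 with $\overline{\mathcal R}=\{(y,z)\in\mathcal E^2:y\le z\}$, $c_1:\overline{\mathcal R}\to[0,\infty]$ is continuous with $c_1\ge k_1$ for a constant $k_1>0$; for each $z\in\mathcal E\setminus\{a\}$, $c_1(\cdot,z)$ is continuously differentiable near $a$, and for each $y\in\mathcal E\setminus\{b\}$, $c_1(y,\cdot)$ is continuously differentiable near $b$. Functions: $g_0(x)=\int_{x_0}^x\int_u^b 2c_0(v)\,dM(v)\,dS(u)$ and $\zeta(x)=\int_{x_0}^x 2M[u,b)\,dS(u)$ for $x\in\mathcal I$. *)

(* Defs.v *)
From Stdlib Require Import Reals Lra ClassicalEpsilon.
Open Scope R_scope.

(* Extended reals, used for possibly infinite endpoints a, b and for
   boundary values c0(a), c0(b) in [0, +oo]. *)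
Inductive Rbar : Type := Finite (r : R) | p_infty | m_infty.

Definition Rbar_lt (x y : Rbar) : Prop :=
  match x, y with
  | Finite a, Finite b => a < b
  | m_infty, Finite _ | m_infty, p_infty | Finite _, p_infty => True
  | _, _ => False
  end.

Definition Rbar_pos (x : Rbar) : Prop :=
  match x with Finite r => 0 < r | p_infty => True | m_infty => False end.

Definition Rbar_nonneg (x : Rbar) : Prop :=
  match x with Finite r => 0 <= r | p_infty => True | m_infty => False end.

Definition inI (a b : Rbar) (x : R) : Prop := Rbar_lt a (Finite x) /\ Rbar_lt (Finite x) b.

Definition Rbar_nbhd (L : Rbar) (P : R -> Prop) : Prop :=
  match L with
  | Finite l => exists eps, 0 < eps /\ forall v, Rabs (v - l) < eps -> P v
  | p_infty => exists M, forall v, M < v -> P v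
  | m_infty => exists M, forall v, v < M -> P v
  end.

Definition lim_left (a : Rbar) (f : R -> R) (L : Rbar) : Prop :=
  forall P, Rbar_nbhd L P ->
    exists c, Rbar_lt a (Finite c) /\
      forall y, Rbar_lt a (Finite y) -> y < c -> P (f y).

Definition lim_right (b : Rbar) (f : R -> R) (L : Rbar) : Prop :=
  forall P, Rbar_nbhd L P ->
    exists c, Rbar_lt (Finite c) b /\
      forall z, c < z -> Rbar_lt (Finite z) b -> P (f z).

Definition lim_left2 (a : Rbar) (F : R -> R -> R) (L : Rbar) : Prop :=
  forall P, Rbar_nbhd L P ->
    exists c, Rbar_lt a (Finite c) /\
      forall y z, Rbar_lt a (Finite y) -> y < z -> z < c -> P (F y z).

Definition lim_right2 (b : Rbar) (F : R -> R -> R) (L : Rbar) : Prop :=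
  forall P, Rbar_nbhd L P ->
    exists c, Rbar_lt (Finite c) b /\
      forall y z, c < y -> y < z -> Rbar_lt (Finite z) b -> P (F y z).

(* The (Stdlib) Riemann integral  int_u^v f  (0 if f is not Riemann integrable;
   RiemannInt is independent of the integrability proof). *)
Definition RI (f : R -> R) (u v : R) : R :=
  epsilon (inhabits 0)
    (fun I => exists pr : Riemann_integrable f u v, RiemannInt pr = I).

Definition LimR (b : Rbar) (f : R -> R) : R :=
  epsilon (inhabits 0) (fun L => lim_right b f (Finite L)).

Section Diffusion.
Variables (mu sigma : R -> R) (x0 : R).

Definition sdens (x : R) : R :=
  exp (- RI (fun t => 2 * mu t / (sigma t) ^ 2) x0 x).

Definition mdens (x : R) : R := 1 / ((sigma x) ^ 2 * sdens x).

(* Feller's classification: a natural boundary (both the integrals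
   Sigma(a) = int_a^x S[eta,x] dM(eta) and N(a) = int_a^x M[eta,x] dS(eta)
   are infinite), and similarly at b. *)
Definition natural_left (a b : Rbar) : Prop :=
  forall x, inI a b x ->
    lim_left a (fun u => RI (fun eta => RI sdens eta x * mdens eta) u x) p_infty /\
    lim_left a (fun u => RI (fun eta => RI mdens eta x * sdens eta) u x) p_infty.

Definition natural_right (a b : Rbar) : Prop :=
  forall x, inI a b x ->
    lim_right b (fun v => RI (fun eta => RI sdens x eta * mdens eta) x v) p_infty /\
    lim_right b (fun v => RI (fun eta => RI mdens x eta * sdens eta) x v) p_infty.

Definition g0 (b : Rbar) (c0 : R -> R) (x : R) : R :=
  RI (fun u => LimR b (fun v => RI (fun t => 2 * c0 t * mdens t) u v) * sdens u) x0 x.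

Definition zeta (b : Rbar) (x : R) : R :=
  RI (fun u => 2 * LimR b (fun v => RI mdens u v) * sdens u) x0 x.

End Diffusion.

(* Main.v *)
From Coquelicot Require Import Coquelicot.
From Stdlib Require Import Reals Lra ClassicalEpsilon.
Require Import Defs.
Open Scope R_scope.

Section Basics.
Variables (a b : Defs.Rbar).

Definition la y := Defs.Rbar_lt a (Defs.Finite y).
Definition rb y := Defs.Rbar_lt (Defs.Finite y) b.

Lemma la_mono y z : la y -> y <= z -> la z.
Proof. unfold la; destruct a; simpl; auto; lra. Qed.
Lemma rb_mono y z : rb z -> y <= z -> rb y.
Proof. unfold rb; destruct b; simpl; auto; lra. Qed.
Lemma la_below y : la y -> exists z, z < y /\ la z.
Proof. unfold la; destruct a; simpl; intros H.
- exists ((r+y)/2); split; lra.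
- contradiction.
- exists (y-1); split; auto; lra. Qed.
Lemma rb_above y : rb y -> exists z, y < z /\ rb z.
Proof. unfold rb; destruct b; simpl; intros H.
- exists ((r+y)/2); split; lra.
- exists (y+1); split; auto; lra.
- contradiction. Qed.

Lemma inI_conv y z t : inI a b y -> inI a b z -> y <= t <= z -> inI a b t.
Proof. intros [H1 H2] [H3 H4] [H5 H6]. split.
- exact (la_mono y t H1 H5).
- exact (rb_mono t z H4 H6). Qed.

Definition ev_left (P : R -> Prop) := exists c, la c /\ forall y, la y -> y < c -> P y.
Definition ev_right (P : R -> Prop) := exists c, rb c /\ forall z, c < z -> rb z -> P z.

Lemma ev_left_and P Q : ev_left P -> ev_left Q -> ev_left (fun y => P y /\ Q y).
Proof. intros [c1 [H1 H1']] [c2 [H2 H2']]. exists (Rmin c1 c2). split.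
- unfold Rmin; destruct (Rle_dec c1 c2); auto.
- intros y Hy Hl. split; [apply H1'|apply H2']; auto;
  eapply Rlt_le_trans; eauto; [apply Rmin_l|apply Rmin_r]. Qed.
Lemma ev_right_and P Q : ev_right P -> ev_right Q -> ev_right (fun y => P y /\ Q y).
Proof. intros [c1 [H1 H1']] [c2 [H2 H2']]. exists (Rmax c1 c2). split.
- unfold Rmax; destruct (Rle_dec c1 c2); auto.
- intros y Hl Hy. split; [apply H1'|apply H2']; auto;
  eapply Rle_lt_trans; eauto; [apply Rmax_l|apply Rmax_r]. Qed.
Lemma ev_left_mono (P Q : R -> Prop) : (forall y, P y -> Q y) -> ev_left P -> ev_left Q.
Proof. intros H [c [H1 H2]]; exists c; split; auto. Qed.
Lemma ev_right_mono (P Q : R -> Prop) : (forall y, P y -> Q y) -> ev_right P -> ev_right Q.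
Proof. intros H [c [H1 H2]]; exists c; split; auto. Qed.
Lemma ev_left_lt z : la z -> ev_left (fun y => y < z).
Proof. intros H; exists z; split; auto. Qed.
Lemma ev_right_gt z : rb z -> ev_right (fun y => z < y).
Proof. intros H; exists z; split; auto. Qed.
Lemma ev_left_la : forall x, inI a b x -> ev_left (fun y => la y /\ inI a b y).
Proof. intros x [H1 H2]; exists x; split; auto. intros y Hy Hl; split; auto; split; auto.
  apply (rb_mono y x); auto; lra. Qed.
Lemma ev_right_rb : forall x, inI a b x -> ev_right (fun y => rb y /\ inI a b y).
Proof. intros x [H1 H2]; exists x; split; auto. intros y Hl Hy; split; auto; split; auto.
  apply (la_mono x y); auto; lra. Qed.
Lemma ev_left_ex P : ev_left P -> exists y, P y.
Proof. intros [c [H1 H2]]. destruct (la_below c H1) as [z [Hz Hz']]. exists z; auto. Qed.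
Lemma ev_right_ex P : ev_right P -> exists y, P y.
Proof. intros [c [H1 H2]]. destruct (rb_above c H1) as [z [Hz Hz']]. exists z; auto. Qed.

Lemma lim_left_ev f L P : lim_left a f L -> Rbar_nbhd L P -> ev_left (fun y => P (f y)).
Proof. intros H HP; exact (H P HP). Qed.
Lemma lim_right_ev f L P : lim_right b f L -> Rbar_nbhd L P -> ev_right (fun y => P (f y)).
Proof. intros H HP; exact (H P HP). Qed.

Lemma lim_left_ext f g L : ev_left (fun y => f y = g y) -> lim_left a f L -> lim_left a g L.
Proof. intros He H P HP. generalize (ev_left_and _ _ He (H P HP)).
  apply ev_left_mono. intros y [E1 E2]; rewrite <- E1; auto. Qed.
Lemma lim_right_ext f g L : ev_right (fun y => f y = g y) -> lim_right b f L -> lim_right b g L.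
Proof. intros He H P HP. generalize (ev_right_and _ _ He (H P HP)).
  apply ev_right_mono. intros y [E1 E2]; rewrite <- E1; auto. Qed.

Lemma nbhd_fin l eps : 0 < eps -> Rbar_nbhd (Defs.Finite l) (fun v => Rabs (v - l) < eps).
Proof. intros; exists eps; split; auto. Qed.
Lemma nbhd_pinf M : Rbar_nbhd Defs.p_infty (fun v => M < v).
Proof. exists M; auto. Qed.

Lemma lim_left_pinf_ge f g k : lim_left a f Defs.p_infty -> 0 < k ->
  ev_left (fun y => f y <= k * g y) -> lim_left a g Defs.p_infty.
Proof. intros H Hk He P [M HM].
  generalize (ev_left_and _ _ He (H _ (nbhd_pinf (k*M)))). apply ev_left_mono.
  intros y [E1 E2]. apply HM. apply (Rmult_lt_reg_l k); lra. Qed.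
Lemma lim_right_pinf_ge f g k : lim_right b f Defs.p_infty -> 0 < k ->
  ev_right (fun y => f y <= k * g y) -> lim_right b g Defs.p_infty.
Proof. intros H Hk He P [M HM].
  generalize (ev_right_and _ _ He (H _ (nbhd_pinf (k*M)))). apply ev_right_mono.
  intros y [E1 E2]. apply HM. apply (Rmult_lt_reg_l k); lra. Qed.

Lemma abs_lt_bound x l eps : Rabs (x - l) < eps -> l - eps < x < l + eps.
Proof. intros H. apply Rabs_def2 in H. lra. Qed.

Lemma le_from_close (L1 L2 al be : R) :
  (forall eps, 0 < eps -> exists x y, Rabs (x - L1) < eps /\ Rabs (y - L2) < eps /\ al * x <= be * y)
  -> al * L1 <= be * L2.
Proof. intros H. apply Rnot_lt_le. intros Hlt.
  set (d := al * L1 - be * L2).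
  set (eps := d / (2 * (Rabs al + Rabs be + 1))).
  assert (Hd : 0 < d) by (unfold d; lra).
  assert (Hden : 0 < 2 * (Rabs al + Rabs be + 1)) by (generalize (Rabs_pos al) (Rabs_pos be); lra).
  assert (He : 0 < eps) by (unfold eps; apply Rdiv_lt_0_compat; lra).
  assert (He2 : (Rabs al + Rabs be) * eps < d).
  { unfold eps. apply (Rmult_lt_reg_r (2 * (Rabs al + Rabs be + 1))); auto.
    field_simplify; try lra. generalize (Rabs_pos al) (Rabs_pos be); nra. }
  destruct (H eps He) as [x [y [Hx [Hy Hxy]]]].
  assert (A1 : Rabs (al * x - al * L1) <= Rabs al * eps).
  { rewrite <- Rmult_minus_distr_l, Rabs_mult. apply Rmult_le_compat_l; [apply Rabs_pos|lra]. }
  assert (A2 : Rabs (be * y - be * L2) <= Rabs be * eps).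
  { rewrite <- Rmult_minus_distr_l, Rabs_mult. apply Rmult_le_compat_l; [apply Rabs_pos|lra]. }
  apply Rabs_le_between in A1. apply Rabs_le_between in A2. unfold d in He2. nra. Qed.

Lemma lim_right_le f g L1 L2 al be : lim_right b f (Defs.Finite L1) -> lim_right b g (Defs.Finite L2) ->
  ev_right (fun v => al * f v <= be * g v) -> al * L1 <= be * L2.
Proof. intros Hf Hg He. apply le_from_close. intros eps Heps.
  destruct (ev_right_ex _ (ev_right_and _ _ He (ev_right_and _ _ (Hf _ (nbhd_fin L1 eps Heps)) (Hg _ (nbhd_fin L2 eps Heps)))))
   as [v [H1 [H2 H3]]]. exists (f v), (g v); auto. Qed.
Lemma lim_left_le f g L1 L2 al be : lim_left a f (Defs.Finite L1) -> lim_left a g (Defs.Finite L2) ->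
  ev_left (fun v => al * f v <= be * g v) -> al * L1 <= be * L2.
Proof. intros Hf Hg He. apply le_from_close. intros eps Heps.
  destruct (ev_left_ex _ (ev_left_and _ _ He (ev_left_and _ _ (Hf _ (nbhd_fin L1 eps Heps)) (Hg _ (nbhd_fin L2 eps Heps)))))
   as [v [H1 [H2 H3]]]. exists (f v), (g v); auto. Qed.

Lemma lim_right_unique f L1 L2 : lim_right b f (Defs.Finite L1) -> lim_right b f (Defs.Finite L2) -> L1 = L2.
Proof. intros H1 H2.
  assert (E : ev_right (fun v => 1 * f v <= 1 * f v)).
  { apply (ev_right_mono (fun v => Rabs (f v - L1) < 1)); [intros; lra|].
    exact (H1 _ (nbhd_fin L1 1 Rlt_0_1)). }
  generalize (lim_right_le f f L1 L2 1 1 H1 H2 E) (lim_right_le f f L2 L1 1 1 H2 H1 E). lra. Qed.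

Lemma LimR_eq f L : lim_right b f (Defs.Finite L) -> LimR b f = L.
Proof. intros H. unfold LimR.
  pose proof (epsilon_spec (inhabits 0) (fun L => lim_right b f (Defs.Finite L)) (ex_intro _ L H)) as HH.
  cbv beta in HH. eapply lim_right_unique; [exact HH|exact H]. Qed.

Lemma lim_right_affine f g L al be : lim_right b f (Defs.Finite L) ->
  ev_right (fun v => g v = al * f v + be) -> lim_right b g (Defs.Finite (al * L + be)).
Proof. intros H He P [eps [Heps HP]].
  set (e := eps / (Rabs al + 1)).
  assert (Hp : 0 < Rabs al + 1) by (generalize (Rabs_pos al); lra).
  assert (He0 : 0 < e) by (unfold e; apply Rdiv_lt_0_compat; lra).
  generalize (ev_right_and _ _ He (H _ (nbhd_fin L e He0))). apply ev_right_mono.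
  intros v [E1 E2]. apply HP. rewrite E1.
  replace (al * f v + be - (al * L + be)) with (al * (f v - L)) by ring.
  rewrite Rabs_mult. apply Rle_lt_trans with (Rabs al * e).
  - apply Rmult_le_compat_l; [apply Rabs_pos|lra].
  - unfold e. apply (Rmult_lt_reg_r (Rabs al + 1)); auto. field_simplify; lra. Qed.

End Basics.


Section Anal.
Variables (a b : Defs.Rbar).
Notation I := (inI a b).

Lemma I_locally x : I x -> locally x I.
Proof. intros [H1 H2].
  destruct (la_below a x H1) as [l [Hl Hl']]. destruct (rb_above b x H2) as [r [Hr Hr']].
  apply (locally_open (fun t => l < t /\ t < r)).
  - apply open_and; [apply open_gt|apply open_lt].
  - intros t [T1 T2]. split; [apply (la_mono a l t)|apply (rb_mono b t r)]; auto; lra.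
  - simpl; split; auto. Qed.

Definition contI (f : R -> R) := forall x, I x -> continuous f x.

Lemma I_min u v : I u -> I v -> I (Rmin u v).
Proof. intros; unfold Rmin; destruct (Rle_dec u v); auto. Qed.
Lemma I_max u v : I u -> I v -> I (Rmax u v).
Proof. intros; unfold Rmax; destruct (Rle_dec u v); auto. Qed.

Lemma exRInt_I f u v : contI f -> I u -> I v -> ex_RInt f u v.
Proof. intros Hf Hu Hv. apply (@ex_RInt_continuous R_CompleteNormedModule). intros z Hz. apply Hf.
  apply (inI_conv a b (Rmin u v) (Rmax u v)); auto; [apply I_min|apply I_max]; auto. Qed.

Lemma RI_RInt f u v : ex_RInt f u v -> RI f u v = RInt f u v.
Proof. intros H. pose proof (ex_RInt_Reals_0 f u v H) as pr.
  unfold RI.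
  pose proof (epsilon_spec (inhabits 0) (fun I0 => exists pr : Riemann_integrable f u v, RiemannInt pr = I0)
     (ex_intro _ (RiemannInt pr) (ex_intro _ pr eq_refl))) as HH.
  cbv beta in HH. destruct HH as [pr' E]. rewrite <- E. symmetry; apply RInt_Reals. Qed.

Lemma RI_RInt_I f u v : contI f -> I u -> I v -> RI f u v = RInt f u v.
Proof. intros; apply RI_RInt, exRInt_I; auto. Qed.

Lemma Chasles_I f u v w : contI f -> I u -> I v -> I w -> RInt f u v + RInt f v w = RInt f u w.
Proof. intros. apply (@RInt_Chasles R_CompleteNormedModule f u v w); apply exRInt_I; auto. Qed.

Lemma swap_I f u v : contI f -> I u -> I v -> RInt f v u = - RInt f u v.
Proof. intros. symmetry. apply (@opp_RInt_swap R_CompleteNormedModule f u v). apply exRInt_I; auto. Qed.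

Lemma derive_I f w t : contI f -> I w -> I t -> is_derive (fun v => RInt f w v) t (f t).
Proof. intros Hf Hw Ht. apply (@is_derive_RInt R_NormedModule f (fun v => RInt f w v) w t); [|apply Hf; auto].
  generalize (I_locally t Ht). apply filter_imp. intros v Hv.
  apply (@RInt_correct R_CompleteNormedModule). apply exRInt_I; auto. Qed.

Lemma cont_prim f w t : contI f -> I w -> I t -> continuous (fun v => RInt f w v) t.
Proof. intros. apply (@ex_derive_continuous R_AbsRing R_NormedModule). eexists. apply derive_I; auto. Qed.

Lemma cont_RI_r f w t : contI f -> I w -> I t -> continuous (fun v => RI f w v) t.
Proof. intros Hf Hw Ht. apply (continuous_ext_loc (fun v => RI f w v) (fun v => RInt f w v)).
  - generalize (I_locally t Ht). apply filter_imp. intros v Hv. symmetry; apply RI_RInt_I; auto.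
  - apply cont_prim; auto. Qed.

Lemma cont_RI_l f w t : contI f -> I w -> I t -> continuous (fun v => RI f v w) t.
Proof. intros Hf Hw Ht. apply (continuous_ext_loc (fun v => RI f v w) (fun v => opp (RInt f w v))).
  - generalize (I_locally t Ht). apply filter_imp. intros v Hv. rewrite RI_RInt_I by auto.
    rewrite (swap_I f w v) by auto. reflexivity.
  - apply (@continuous_opp R_UniformSpace R_AbsRing R_NormedModule (fun v => RInt f w v)). apply cont_prim; auto. Qed.

Lemma RInt_le_I f g u v : contI f -> contI g -> I u -> I v -> u <= v ->
  (forall x, u < x < v -> f x <= g x) -> RInt f u v <= RInt g u v.
Proof. intros. apply RInt_le; auto; apply exRInt_I; auto. Qed.

Lemma RInt_ge0_I f u v : contI f -> I u -> I v -> u <= v ->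
  (forall x, u < x < v -> 0 <= f x) -> 0 <= RInt f u v.
Proof. intros. apply RInt_ge_0; auto; apply exRInt_I; auto. Qed.

Lemma RInt_pos_I f u v : contI f -> I u -> I v -> u < v ->
  (forall x, u < x < v -> 0 < f x) -> 0 < RInt f u v.
Proof. intros Hf Hu Hv Huv H. apply RInt_gt_0; auto. intros x Hx. apply Hf.
  apply (inI_conv a b u v); auto. Qed.

Lemma RInt_scal_I f k u v : contI f -> I u -> I v -> RInt (fun x => k * f x) u v = k * RInt f u v.
Proof. intros. apply (@RInt_scal R_CompleteNormedModule f u v k). apply exRInt_I; auto. Qed.

Lemma contI_scal f k : contI f -> contI (fun x => k * f x).
Proof. intros H x Hx. apply (continuous_mult (fun _ => k) f). apply continuous_const. auto. Qed.
Lemma contI_mult f g : contI f -> contI g -> contI (fun x => f x * g x).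
Proof. intros H1 H2 x Hx. apply (continuous_mult f g); auto. Qed.

End Anal.


Lemma abs_b x : - Rabs x <= x <= Rabs x.
Proof. apply Rabs_le_between. lra. Qed.

Lemma band (L : Defs.Rbar) (P : R -> Prop) : Rbar_nonneg L -> Rbar_nbhd L P ->
  exists lo (Hi : R -> Prop),
   (forall v, lo <= v -> (forall hi, Hi hi -> v <= hi) -> P v) /\
   Rbar_nbhd L (fun v => lo < v /\ forall hi, Hi hi -> v < hi) /\
   (forall A B, exists W, forall F H, W < H -> lo * H <= F ->
       (forall hi, Hi hi -> F <= hi * H) -> P ((A + F) / (B + H))).
Proof. intros Hnn HP. destruct L as [l| |]; simpl in *.
- destruct HP as [e [He HP]].
  exists (l - e/2), (fun hi => hi = l + e/2). split; [|split].
  + intros v H1 H2. apply HP. specialize (H2 _ eq_refl). apply Rabs_def1; lra.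
  + exists (e/2); split; [lra|]. intros v Hv. apply Rabs_def2 in Hv.
    split; [lra|]. intros hi ->; lra.
  + intros A B. set (Q := Rabs (A - l * B) + e * Rabs B).
    exists ((2/e) * Q + Rabs B + 1). intros F H HW H1 H2. specialize (H2 _ eq_refl).
    assert (HQ : e / 2 * ((2/e) * Q + Rabs B + 1) = Q + e/2 * (Rabs B + 1)) by (field; lra).
    assert (HQ0 : 0 <= Q) by (unfold Q; generalize (Rabs_pos (A - l*B)) (Rabs_pos B); nra).
    assert (HW2 : Q < e / 2 * H).
    { apply Rle_lt_trans with (e / 2 * ((2/e) * Q + Rabs B + 1)).
      - rewrite HQ. generalize (Rabs_pos B); nra.
      - apply Rmult_lt_compat_l; lra. }
    generalize (abs_b (A - l * B)) (abs_b B). intros G1 G2.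
    assert (HD : 0 < B + H) by (generalize (Rabs_pos B); nra).
    apply HP.
    replace ((A + F) / (B + H) - l) with ((A + F - l * (B + H)) * / (B + H)) by (field; lra).
    assert (X1 : A + F - l * (B + H) < e * (B + H)) by (unfold Q in HW2; nra).
    assert (X2 : - (e * (B + H)) < A + F - l * (B + H)) by (unfold Q in HW2; nra).
    apply Rabs_def1.
    * apply (Rmult_lt_reg_r (B + H)); auto. rewrite Rmult_assoc, Rinv_l; lra.
    * apply (Rmult_lt_reg_r (B + H)); auto. rewrite Rmult_assoc, Rinv_l; lra.
- destruct HP as [K HP].
  exists (Rabs K + 1), (fun _ => False). split; [|split].
  + intros v H1 _. apply HP. generalize (Rle_abs K); lra.
  + exists (Rabs K + 1). intros v Hv. split; auto. intros _ [].
  + intros A B. exists (Rabs (K * B - A) + Rabs B + 1). intros F H HW H1 _.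
    generalize (abs_b (K * B - A)) (abs_b B) (abs_b K). intros G1 G2 G3.
    assert (HD : 0 < B + H) by lra.
    apply HP. apply (Rmult_lt_reg_r (B + H)); auto.
    unfold Rdiv. rewrite Rmult_assoc, Rinv_l by lra. nra.
- contradiction. Qed.

Lemma band_div lo (Hi : R -> Prop) F H : 0 < H -> lo * H <= F -> (forall hi, Hi hi -> F <= hi * H) ->
  lo <= F / H /\ (forall hi, Hi hi -> F / H <= hi).
Proof. intros HH H1 H2. split.
- apply (Rmult_le_reg_r H); auto. unfold Rdiv; rewrite Rmult_assoc, Rinv_l; lra.
- intros hi Hh. specialize (H2 hi Hh). apply (Rmult_le_reg_r H); auto.
  unfold Rdiv; rewrite Rmult_assoc, Rinv_l; lra. Qed.

Section Final.
Variables (a b : Defs.Rbar) (x0 : R) (f h g zt : R -> R) (ca cb : Defs.Rbar).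
Notation I := (inI a b).
Hypotheses (Hx0 : I x0) (Hf : contI a b f) (Hh : contI a b h) (hpos : forall x, I x -> 0 < h x)
  (Hg : forall x, I x -> g x = RInt f x0 x) (Hz : forall x, I x -> zt x = RInt h x0 x)
  (Hra : lim_left a (fun u => f u / h u) ca) (Hrb : lim_right b (fun u => f u / h u) cb)
  (Hha : forall x, I x -> lim_left a (fun y => RInt h y x) Defs.p_infty)
  (Hhb : forall x, I x -> lim_right b (fun z => RInt h x z) Defs.p_infty)
  (Hca : Rbar_nonneg ca) (Hcb : Rbar_nonneg cb).

Lemma diff_g y z : I y -> I z -> g z - g y = RInt f y z.
Proof. intros Hy Hz'. rewrite !Hg by auto. rewrite <- (Chasles_I a b f x0 y z) by auto. ring. Qed.
Lemma diff_z y z : I y -> I z -> zt z - zt y = RInt h y z.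
Proof. intros Hy Hz'. rewrite !Hz by auto. rewrite <- (Chasles_I a b h x0 y z) by auto. ring. Qed.

Lemma band_avg lo (Hi : R -> Prop) y z : I y -> I z -> y <= z ->
  (forall u, y < u < z -> lo < f u / h u /\ forall hi, Hi hi -> f u / h u < hi) ->
  lo * RInt h y z <= RInt f y z /\ (forall hi, Hi hi -> RInt f y z <= hi * RInt h y z).
Proof. intros Hy Hz' Hyz Hp.
  assert (Iu : forall u, y < u < z -> I u) by (intros u Hu; apply (inI_conv a b y z); auto; lra).
  split.
- rewrite <- (RInt_scal_I a b h lo y z) by auto. apply (RInt_le_I a b); auto. apply (contI_scal a b); auto.
  intros u Hu. destruct (Hp u Hu) as [H1 _]. specialize (hpos u (Iu u Hu)).
  apply (Rmult_lt_compat_r (h u)) in H1; auto. unfold Rdiv in H1.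
  rewrite Rmult_assoc, Rinv_l in H1 by lra; lra.
- intros hi Hhi. rewrite <- (RInt_scal_I a b h hi y z) by auto. apply (RInt_le_I a b); auto. apply (contI_scal a b); auto.
  intros u Hu. destruct (Hp u Hu) as [_ H1]. specialize (H1 hi Hhi). specialize (hpos u (Iu u Hu)).
  apply (Rmult_lt_compat_r (h u)) in H1; auto. unfold Rdiv in H1.
  rewrite Rmult_assoc, Rinv_l in H1 by lra; lra. Qed.

Lemma claim3 : lim_left2 a (fun y z => (g z - g y) / (zt z - zt y)) ca.
Proof. intros P HP. destruct (band ca P Hca HP) as [lo [Hi [Hsub [Hin _]]]].
  destruct (ev_left_and a _ _ (Hra _ Hin) (ev_left_la a b x0 Hx0)) as [c [Hc Hc']].
  exists c; split; auto. intros y z Hy Hyz Hzc.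
  assert (Hz' : la a z) by (apply (la_mono a y z); auto; lra).
  destruct (Hc' y Hy ltac:(lra)) as [_ [_ Iy]]. destruct (Hc' z Hz' Hzc) as [_ [_ Iz]].
  rewrite diff_g, diff_z by auto.
  destruct (band_avg lo Hi y z Iy Iz ltac:(lra)) as [A1 A2].
  { intros u Hu. apply Hc'. apply (la_mono a y u); auto; lra. lra. }
  destruct (band_div lo Hi (RInt f y z) (RInt h y z)) as [B1 B2]; auto.
  apply (RInt_pos_I a b); auto. intros u Hu; apply hpos, (inI_conv a b y z); auto; lra. Qed.

Lemma claim4 : lim_right2 b (fun y z => (g z - g y) / (zt z - zt y)) cb.
Proof. intros P HP. destruct (band cb P Hcb HP) as [lo [Hi [Hsub [Hin _]]]].
  destruct (ev_right_and b _ _ (Hrb _ Hin) (ev_right_rb a b x0 Hx0)) as [c [Hc Hc']].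
  exists c; split; auto. intros y z Hy Hyz Hzc.
  assert (Hy' : rb b y) by (apply (rb_mono b y z); auto; lra).
  destruct (Hc' y Hy Hy') as [_ [_ Iy]]. destruct (Hc' z ltac:(lra) Hzc) as [_ [_ Iz]].
  rewrite diff_g, diff_z by auto.
  destruct (band_avg lo Hi y z Iy Iz ltac:(lra)) as [A1 A2].
  { intros u Hu. apply Hc'. lra. apply (rb_mono b u z); auto; lra. }
  destruct (band_div lo Hi (RInt f y z) (RInt h y z)) as [B1 B2]; auto.
  apply (RInt_pos_I a b); auto. intros u Hu; apply hpos, (inI_conv a b y z); auto; lra. Qed.

Lemma claim1 z : I z -> lim_left a (fun y => (g z - g y) / (zt z - zt y)) ca.
Proof. intros Iz P HP. destruct (band ca P Hca HP) as [lo [Hi [Hsub [Hin Hmix]]]].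
  destruct (ev_left_and a _ _ (Hra _ Hin) (ev_left_and a _ _ (ev_left_la a b x0 Hx0) (ev_left_lt a z (proj1 Iz))))
   as [c0 [Hc0 Hc0']].
  destruct (la_below a c0 Hc0) as [c [Hcc Hc]].
  destruct (Hc0' c Hc Hcc) as [_ [[_ Ic] Hcz]].
  destruct (Hmix (RInt f c z) (RInt h c z)) as [W HW].
  generalize (ev_left_and a _ _ (ev_left_la a b x0 Hx0) (ev_left_and a _ _ (ev_left_lt a c Hc) (Hha c Ic _ (nbhd_pinf W)))).
  apply ev_left_mono. intros y [[Hy Iy] [Hyc HWy]].
  rewrite diff_g, diff_z by auto.
  rewrite <- (Chasles_I a b f y c z), <- (Chasles_I a b h y c z) by auto.
  rewrite (Rplus_comm (RInt f y c)), (Rplus_comm (RInt h y c)).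
  destruct (band_avg lo Hi y c Iy Ic ltac:(lra)) as [A1 A2].
  { intros u Hu. apply Hc0'. apply (la_mono a y u); auto; lra. lra. }
  apply HW; auto. Qed.

Lemma claim2 y : I y -> lim_right b (fun z => (g z - g y) / (zt z - zt y)) cb.
Proof. intros Iy P HP. destruct (band cb P Hcb HP) as [lo [Hi [Hsub [Hin Hmix]]]].
  destruct (ev_right_and b _ _ (Hrb _ Hin) (ev_right_and b _ _ (ev_right_rb a b x0 Hx0) (ev_right_gt b y (proj2 Iy))))
   as [c0 [Hc0 Hc0']].
  destruct (rb_above b c0 Hc0) as [c [Hcc Hc]].
  destruct (Hc0' c Hcc Hc) as [_ [[_ Ic] Hcz]].
  destruct (Hmix (RInt f y c) (RInt h y c)) as [W HW].
  generalize (ev_right_and b _ _ (ev_right_rb a b x0 Hx0) (ev_right_and b _ _ (ev_right_gt b c Hc) (Hhb c Ic _ (nbhd_pinf W)))).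
  apply ev_right_mono. intros z [[Hz' Iz] [Hyc HWy]].
  rewrite diff_g, diff_z by auto.
  rewrite <- (Chasles_I a b f y c z), <- (Chasles_I a b h y c z) by auto.
  destruct (band_avg lo Hi c z Ic Iz ltac:(lra)) as [A1 A2].
  { intros u Hu. apply Hc0'. lra. apply (rb_mono b u z); auto; lra. }
  apply HW; auto. Qed.

Lemma g0_x0 : g x0 = 0.
Proof. rewrite Hg by auto. apply (@RInt_point R_CompleteNormedModule). Qed.
Lemma z0_x0 : zt x0 = 0.
Proof. rewrite Hz by auto. apply (@RInt_point R_CompleteNormedModule). Qed.

Lemma ratio_x0 y : (g x0 - g y) / (zt x0 - zt y) = g y / zt y.
Proof. rewrite g0_x0, z0_x0. unfold Rdiv. rewrite !Rminus_0_l, Rinv_opp. ring. Qed.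

Lemma claim5 : lim_left a (fun y => g y / zt y) ca.
Proof. intros P HP. generalize (claim1 x0 Hx0 P HP). apply ev_left_mono.
  intros y; rewrite ratio_x0; auto. Qed.
Lemma claim6 : lim_right b (fun y => g y / zt y) cb.
Proof. intros P HP. generalize (claim2 x0 Hx0 P HP). apply ev_right_mono.
  intros y. replace ((g y - g x0) / (zt y - zt x0)) with ((g x0 - g y) / (zt x0 - zt y)).
  rewrite ratio_x0; auto. unfold Rdiv. rewrite <- (Ropp_minus_distr (g x0)), <- (Ropp_minus_distr (zt x0)), Rinv_opp. ring. Qed.

Lemma pos_delta L : Rbar_pos L -> exists d, 0 < d /\ Rbar_nbhd L (fun v => d < v).
Proof. destruct L as [l| |]; simpl; intros H.
- exists (l/2); split; [lra|]. exists (l/2); split; [lra|]. intros v Hv. apply Rabs_def2 in Hv. lra.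
- exists 1; split; [lra|]. exists 1; auto.
- contradiction. Qed.

Lemma claim7 : Rbar_pos ca -> lim_left a g Defs.m_infty.
Proof. intros Hp P [M HM]. destruct (pos_delta ca Hp) as [d [Hd Hn]].
  set (K := (Rabs M + 1) / d).
  generalize (ev_left_and a _ _ (ev_left_la a b x0 Hx0) (ev_left_and a _ _ (ev_left_lt a x0 (proj1 Hx0))
     (ev_left_and a _ _ (claim5 _ Hn) (Hha x0 Hx0 _ (nbhd_pinf K))))).
  apply ev_left_mono. intros y [[_ Iy] [Hyx [H1 H2]]]. apply HM.
  assert (Ez : zt y = - RInt h y x0).
  { rewrite Hz by auto. apply (swap_I a b h y x0); auto. }
  cbv beta in H2.
  assert (H3 : zt y < - K) by (rewrite Ez; lra).
  assert (Hzn : zt y < 0).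
  { assert (0 < K) by (unfold K; apply Rdiv_lt_0_compat; generalize (Rabs_pos M); lra). lra. }
  assert (E : g y = (g y / zt y) * zt y) by (field; lra).
  assert (HK : d * K = Rabs M + 1) by (unfold K; field; lra). clearbody K.
  cbv beta in H1. rewrite E.
  assert (S1 : (g y / zt y) * zt y <= d * zt y) by nra.
  assert (S2 : d * zt y < - (d * K)) by nra.
  generalize (abs_b M). intros. eapply Rle_lt_trans; [exact S1|]. lra. Qed.

Lemma claim8 : Rbar_pos cb -> lim_right b g Defs.p_infty.
Proof. intros Hp P [M HM]. destruct (pos_delta cb Hp) as [d [Hd Hn]].
  set (K := (Rabs M + 1) / d).
  generalize (ev_right_and b _ _ (ev_right_rb a b x0 Hx0) (ev_right_and b _ _ (ev_right_gt b x0 (proj2 Hx0))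
     (ev_right_and b _ _ (claim6 _ Hn) (Hhb x0 Hx0 _ (nbhd_pinf K))))).
  apply ev_right_mono. intros y [[_ Iy] [Hyx [H1 H2]]]. apply HM.
  cbv beta in H2. rewrite <- Hz in H2 by auto.
  assert (Hzn : 0 < zt y).
  { assert (0 < K) by (unfold K; apply Rdiv_lt_0_compat; generalize (Rabs_pos M); lra). lra. }
  assert (E : g y = (g y / zt y) * zt y) by (field; lra).
  assert (HK : d * K = Rabs M + 1) by (unfold K; field; lra). clearbody K.
  cbv beta in H1. rewrite E.
  assert (S1 : d * zt y <= (g y / zt y) * zt y) by (apply Rmult_le_compat_r; lra).
  assert (S2 : d * K < d * zt y) by (apply Rmult_lt_compat_l; lra).
  generalize (Rle_abs M). intros. eapply Rlt_le_trans; [|exact S1]. lra. Qed.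

End Final.


Section Tail.
Variables (a b : Defs.Rbar) (x0 : R) (phi : R -> R).
Notation I := (inI a b).
Hypotheses (Hx0 : I x0) (Hphi : contI a b phi)
  (Hlim : forall y, I y -> exists L, lim_right b (fun v => RI phi y v) (Defs.Finite L)).
Definition Tl u := LimR b (fun v => RI phi u v).

Lemma Tl_lim u : I u -> lim_right b (fun v => RI phi u v) (Defs.Finite (Tl u)).
Proof. intros Hu. destruct (Hlim u Hu) as [L HL]. unfold Tl. rewrite (LimR_eq b _ L HL). exact HL. Qed.

Lemma Tl_shift u w : I u -> I w -> Tl u = RInt phi u w + Tl w.
Proof. intros Hu Hw.
  assert (H : lim_right b (fun v => RI phi u v) (Defs.Finite (1 * Tl w + RInt phi u w))).
  { apply (lim_right_affine b (fun v => RI phi w v)). apply Tl_lim; auto.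
    generalize (ev_right_rb a b x0 Hx0). apply ev_right_mono. intros v [_ Iv].
    rewrite !(RI_RInt_I a b) by auto. rewrite <- (Chasles_I a b phi u w v) by auto. ring. }
  rewrite (lim_right_unique b _ _ _ (Tl_lim u Hu) H). ring. Qed.

Lemma Tl_derive t : I t -> is_derive Tl t (- phi t).
Proof. intros It.
  apply (is_derive_ext_loc (fun u => Tl x0 - RInt phi x0 u)).
  - generalize (I_locally a b t It). apply filter_imp. intros u Iu; cbv beta.
    rewrite (Tl_shift u x0) by auto. rewrite (swap_I a b phi x0 u) by auto. apply Rplus_comm.
  - apply (is_derive_ext (fun u => minus (Tl x0) (RInt phi x0 u))); [reflexivity|].
    replace (- phi t) with (minus zero (phi t)) by (unfold minus, zero, plus, opp; simpl; ring).
    apply (@is_derive_minus R_AbsRing R_NormedModule (fun _ => Tl x0) (fun u => RInt phi x0 u) t zero (phi t)).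
    apply (@is_derive_const R_AbsRing R_NormedModule). apply (derive_I a b); auto. Qed.

Lemma Tl_cont : contI a b Tl.
Proof. intros t It. apply (@ex_derive_continuous R_AbsRing R_NormedModule). eexists. apply Tl_derive; auto. Qed.

Hypothesis (phipos : forall x, I x -> 0 < phi x).

Lemma Tl_nonneg w : I w -> 0 <= Tl w.
Proof. intros Iw.
  assert (0 * Tl w <= 1 * Tl w); [|lra].
  apply (lim_right_le b (fun v => RI phi w v) (fun v => RI phi w v)); try apply Tl_lim; auto.
  generalize (ev_right_and b _ _ (ev_right_rb a b w Iw) (ev_right_gt b w (proj2 Iw))).
  apply ev_right_mono. intros v [[_ Iv] Hv].
  rewrite (RI_RInt_I a b) by auto. rewrite Rmult_0_l, Rmult_1_l.
  apply (RInt_ge0_I a b); auto. lra.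
  intros; apply Rlt_le, phipos, (inI_conv a b w v); auto; lra. Qed.

Lemma Tl_pos u : I u -> 0 < Tl u.
Proof. intros Iu. destruct (rb_above b u (proj2 Iu)) as [w [Hw Hw']].
  assert (Iw : I w) by (split; auto; apply (la_mono a u w); [apply Iu|lra]).
  rewrite (Tl_shift u w) by auto.
  generalize (Tl_nonneg w Iw). intros.
  assert (0 < RInt phi u w); [|lra].
  apply (RInt_pos_I a b); auto. intros; apply phipos, (inI_conv a b u w); auto; lra. Qed.

Lemma Tl_ge u w : I u -> I w -> u <= w -> RInt phi u w <= Tl u.
Proof. intros Iu Iw Huw. rewrite (Tl_shift u w) by auto. generalize (Tl_nonneg w Iw). lra. Qed.
End Tail.


Ltac req := lazymatch goal with |- @eq _ ?x ?y => change (@eq R x y) end.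

Section Diff.
Variables (a b : Defs.Rbar) (mu sigma c0 : R -> R) (x0 : R).
Notation I := (inI a b).
Notation s := (sdens mu sigma x0).
Notation m := (mdens mu sigma x0).
Hypotheses (Hx0 : I x0)
  (Hmu : forall x, I x -> continuity_pt mu x)
  (Hsigma : forall x, I x -> continuity_pt sigma x)
  (Hsigma0 : forall x, I x -> sigma x <> 0)
  (Hc0 : forall x, I x -> continuity_pt c0 x /\ 0 <= c0 x).

Lemma cpt x f : continuity_pt f x -> continuous f x.
Proof. intros H. exact (proj1 (continuity_pt_filterlim f x) H). Qed.

Lemma sig2_pos x : I x -> 0 < sigma x ^ 2.
Proof. intros Hx. generalize (Rsqr_pos_lt _ (Hsigma0 x Hx)). unfold Rsqr. intros; nra. Qed.

Lemma cont_sig2 x : I x -> continuous (fun t => sigma t ^ 2) x.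
Proof. intros Hx. apply (continuous_ext (fun t => mult (sigma t) (sigma t))).
  - intros t; unfold mult; simpl; ring.
  - apply (continuous_mult sigma sigma); apply cpt; auto. Qed.

Lemma cont_psi : contI a b (fun t => 2 * mu t / sigma t ^ 2).
Proof. intros x Hx. apply (continuous_ext (fun t => mult (2 * mu t) (/ (sigma t ^ 2)))).
  - intros t; reflexivity.
  - apply (continuous_mult (fun t => 2 * mu t) (fun t => / (sigma t ^ 2))).
    + apply (continuous_mult (fun _ => 2) mu). apply continuous_const. apply cpt; auto.
    + apply continuous_Rinv_comp. apply cont_sig2; auto. generalize (sig2_pos x Hx); lra. Qed.

Lemma cont_s : contI a b s.
Proof. intros x Hx.
  apply (continuous_ext_loc s (fun t => exp (opp (RInt (fun t => 2 * mu t / sigma t ^ 2) x0 t)))).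
  - generalize (I_locally a b x Hx). apply filter_imp. intros t It; cbv beta.
    unfold sdens. rewrite (RI_RInt_I a b) by (auto; apply cont_psi). reflexivity.
  - apply continuous_exp_comp.
    apply (@continuous_opp R_UniformSpace R_AbsRing R_NormedModule (fun t => RInt (fun t => 2 * mu t / sigma t ^ 2) x0 t)).
    apply (cont_prim a b); auto. apply cont_psi. Qed.

Lemma s_pos x : 0 < s x.
Proof. unfold sdens. apply exp_pos. Qed.

Lemma cont_m : contI a b m.
Proof. intros x Hx. apply (continuous_ext (fun t => / (sigma t ^ 2 * s t))).
  - intros t. unfold mdens. unfold Rdiv. rewrite Rmult_1_l. reflexivity.
  - apply continuous_Rinv_comp.
    + apply (continuous_mult (fun t => sigma t ^ 2) s). apply cont_sig2; auto. apply cont_s; auto.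
    + generalize (sig2_pos x Hx) (s_pos x). intros; nra. Qed.

Lemma m_pos x : I x -> 0 < m x.
Proof. intros Hx. unfold mdens. apply Rdiv_lt_0_compat; [lra|].
  apply Rmult_lt_0_compat; [apply sig2_pos; auto|apply s_pos]. Qed.

Lemma cont_c0 : contI a b c0.
Proof. intros x Hx. apply cpt, Hc0; auto. Qed.

Lemma cont_cm : contI a b (fun t => c0 t * m t).
Proof. apply (contI_mult a b); [apply cont_c0|apply cont_m]. Qed.
Lemma cont_2cm : contI a b (fun t => 2 * c0 t * m t).
Proof. intros x Hx. apply (continuous_ext (fun t => 2 * (c0 t * m t))). intros; symmetry; apply Rmult_assoc.
  apply (contI_scal a b); auto. apply cont_cm. Qed.

Lemma RInt_2cm u v : I u -> I v -> RInt (fun t => 2 * c0 t * m t) u v = 2 * RInt (fun t => c0 t * m t) u v.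
Proof. intros. rewrite <- (RInt_scal_I a b) by (auto; apply cont_cm). apply RInt_ext. intros; req; ring. Qed.


Hypotheses
  (HA1 : forall x, I x -> exists L, lim_left a (fun u => RI s u x) (Defs.Finite L))
  (HA3 : forall y, I y -> exists L, lim_right b (fun v => RI m y v) (Defs.Finite L))
  (HB : forall y, I y -> exists L, lim_right b (fun v => RI (fun t => c0 t * m t) y v) (Defs.Finite L)).

Lemma HB2 : forall y, I y -> exists L, lim_right b (fun v => RI (fun t => 2 * c0 t * m t) y v) (Defs.Finite L).
Proof. intros y Iy. destruct (HB y Iy) as [L HL]. exists (2 * L + 0).
  apply (lim_right_affine b (fun v => RI (fun t => c0 t * m t) y v)); auto.
  generalize (ev_right_rb a b x0 Hx0). apply ev_right_mono. intros v [_ Iv].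
  rewrite !(RI_RInt_I a b) by (auto; try apply cont_cm; apply cont_2cm).
  rewrite RInt_2cm by auto. ring. Qed.

Definition Mb := Tl b m.
Definition Cb := Tl b (fun t => c0 t * m t).
Definition Gb := Tl b (fun t => 2 * c0 t * m t).

Lemma Mb_lim u : I u -> lim_right b (fun v => RI m u v) (Defs.Finite (Mb u)).
Proof. exact (Tl_lim a b m HA3 u). Qed.
Lemma Mb_shift u w : I u -> I w -> Mb u = RInt m u w + Mb w.
Proof. exact (Tl_shift a b x0 m Hx0 cont_m HA3 u w). Qed.
Lemma Mb_der t : I t -> is_derive Mb t (- m t).
Proof. exact (Tl_derive a b x0 m Hx0 cont_m HA3 t). Qed.
Lemma Mb_cont : contI a b Mb.
Proof. exact (Tl_cont a b x0 m Hx0 cont_m HA3). Qed.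
Lemma Mb_pos u : I u -> 0 < Mb u.
Proof. exact (Tl_pos a b x0 m Hx0 cont_m HA3 m_pos u). Qed.
Lemma Cb_lim u : I u -> lim_right b (fun v => RI (fun t => c0 t * m t) u v) (Defs.Finite (Cb u)).
Proof. exact (Tl_lim a b _ HB u). Qed.
Lemma Cb_shift u w : I u -> I w -> Cb u = RInt (fun t => c0 t * m t) u w + Cb w.
Proof. exact (Tl_shift a b x0 _ Hx0 cont_cm HB u w). Qed.
Lemma Gb_lim u : I u -> lim_right b (fun v => RI (fun t => 2 * c0 t * m t) u v) (Defs.Finite (Gb u)).
Proof. exact (Tl_lim a b _ HB2 u). Qed.
Lemma Gb_cont : contI a b Gb.
Proof. exact (Tl_cont a b x0 _ Hx0 cont_2cm HB2). Qed.

Lemma Gb_eq u : I u -> Gb u = 2 * Cb u.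
Proof. intros Iu. assert (H : lim_right b (fun v => RI (fun t => 2 * c0 t * m t) u v) (Defs.Finite (2 * Cb u + 0))).
  { apply (lim_right_affine b (fun v => RI (fun t => c0 t * m t) u v)). apply Cb_lim; auto.
    generalize (ev_right_rb a b x0 Hx0). apply ev_right_mono. intros v [_ Iv].
    rewrite !(RI_RInt_I a b) by (auto; try apply cont_cm; apply cont_2cm).
    rewrite RInt_2cm by auto. ring. }
  rewrite (lim_right_unique b _ _ _ (Gb_lim u Iu) H). ring. Qed.

Lemma avg_lo k phi w u v : contI a b phi -> contI a b w -> (forall x, I x -> 0 < w x) -> I u -> I v -> u <= v ->
  (forall t, u < t < v -> k <= phi t) -> k * RInt w u v <= RInt (fun t => phi t * w t) u v.
Proof. intros Hp Hw Hwp Iu Iv Huv H. rewrite <- (RInt_scal_I a b) by auto.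
  apply (RInt_le_I a b); auto. apply (contI_scal a b); auto. apply (contI_mult a b); auto.
  intros t Ht. apply Rmult_le_compat_r; auto. apply Rlt_le, Hwp, (inI_conv a b u v); auto; lra. Qed.
Lemma avg_hi k phi w u v : contI a b phi -> contI a b w -> (forall x, I x -> 0 < w x) -> I u -> I v -> u <= v ->
  (forall t, u < t < v -> phi t <= k) -> RInt (fun t => phi t * w t) u v <= k * RInt w u v.
Proof. intros Hp Hw Hwp Iu Iv Huv H. rewrite <- (RInt_scal_I a b) by auto.
  apply (RInt_le_I a b); auto. apply (contI_mult a b); auto. apply (contI_scal a b); auto.
  intros t Ht. apply Rmult_le_compat_r; auto. apply Rlt_le, Hwp, (inI_conv a b u v); auto; lra. Qed.


Variables (ca cb : Defs.Rbar).
Hypotheses (Hnata : natural_left mu sigma x0 a b) (Hnatb : natural_right mu sigma x0 a b)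
  (Hca : lim_left a c0 ca) (Hcb : lim_right b c0 cb)
  (Hca_nn : Rbar_nonneg ca) (Hcb_nn : Rbar_nonneg cb).

Lemma K2b : lim_right b (fun u => Cb u / Mb u) cb.
Proof. intros P HP. destruct (band cb P Hcb_nn HP) as [lo [Hi [Hsub [Hin _]]]].
  destruct (ev_right_and b _ _ (Hcb _ Hin) (ev_right_rb a b x0 Hx0)) as [d [Hd Hd']].
  exists d; split; auto. intros u Hdu Hu.
  destruct (Hd' u Hdu Hu) as [_ [_ Iu]].
  assert (Hpt : forall v t, u < t < v -> rb b v -> lo <= c0 t /\ (forall hi, Hi hi -> c0 t <= hi)).
  { intros v t Ht Hv. destruct (Hd' t ltac:(lra) (rb_mono b t v Hv ltac:(lra))) as [[H1 H2] _].
    split; [lra|]. intros hi Hh; specialize (H2 hi Hh); lra. }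
  cut (lo <= Cb u / Mb u /\ (forall hi, Hi hi -> Cb u / Mb u <= hi)).
  { intros [B1 B2]; apply Hsub; auto. }
  apply (band_div lo Hi (Cb u) (Mb u)); [apply Mb_pos; auto| |].
  - assert (lo * Mb u <= 1 * Cb u); [|lra].
    apply (lim_right_le b (fun v => RI m u v) (fun v => RI (fun t => c0 t * m t) u v)); [apply Mb_lim|apply Cb_lim|]; auto.
    generalize (ev_right_and b _ _ (ev_right_rb a b u Iu) (ev_right_gt b u Hu)). apply ev_right_mono.
    intros v [[Hv Iv] Huv].
    rewrite !(RI_RInt_I a b) by (auto; try apply cont_cm; apply cont_m). rewrite Rmult_1_l.
    apply avg_lo; auto using cont_c0, cont_m, m_pos; [lra|]. intros t Ht. apply (Hpt v t Ht Hv).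
  - intros hi Hh. assert (1 * Cb u <= hi * Mb u); [|lra].
    apply (lim_right_le b (fun v => RI (fun t => c0 t * m t) u v) (fun v => RI m u v)); [apply Cb_lim|apply Mb_lim|]; auto.
    generalize (ev_right_and b _ _ (ev_right_rb a b u Iu) (ev_right_gt b u Hu)). apply ev_right_mono.
    intros v [[Hv Iv] Huv].
    rewrite !(RI_RInt_I a b) by (auto; try apply cont_cm; apply cont_m). rewrite Rmult_1_l.
    apply avg_hi; auto using cont_c0, cont_m, m_pos; [lra|]. intros t Ht. apply (Hpt v t Ht Hv); auto. Qed.

Lemma RIs_le c Sc eta : I c -> lim_left a (fun u => RI s u c) (Defs.Finite Sc) -> I eta -> eta <= c ->
  RI s eta c <= Sc.
Proof. intros Ic HSc Ie Hec. assert (1 * RI s eta c <= 1 * Sc); [|lra].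
  apply (lim_left_le a (fun _ => RI s eta c) (fun y => RI s y c)); auto.
  - intros P [eps [He HP]]. exists eta; split; [apply Ie|]. intros; apply HP.
    rewrite Rminus_diag, Rabs_R0; lra.
  - generalize (ev_left_and a _ _ (ev_left_la a b x0 Hx0) (ev_left_lt a eta (proj1 Ie))). apply ev_left_mono.
    intros y [[Hy Iy] Hye]. rewrite !(RI_RInt_I a b) by (auto; apply cont_s).
    rewrite <- (Chasles_I a b s y eta c) by (auto; apply cont_s).
    assert (0 <= RInt s y eta); [|lra]. apply (RInt_ge0_I a b); auto. apply cont_s. lra.
    intros; apply Rlt_le, s_pos. Qed.

Lemma K1a c : I c -> lim_left a (fun u => RInt m u c) Defs.p_infty.
Proof. intros Ic. destruct (HA1 c Ic) as [Sc HSc]. destruct (Hnata c Ic) as [HN _].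
  apply (lim_left_pinf_ge a _ _ (Rabs Sc + 1) HN). generalize (Rabs_pos Sc); lra.
  generalize (ev_left_and a _ _ (ev_left_la a b x0 Hx0) (ev_left_lt a c (proj1 Ic))). apply ev_left_mono.
  intros u [[Hu Iu] Huc].
  assert (HG : contI a b (fun eta => RI s eta c * m eta)).
  { apply (contI_mult a b); [|apply cont_m]. intros t It. apply (cont_RI_l a b); auto. apply cont_s. }
  rewrite (RI_RInt_I a b) by auto. rewrite <- (RInt_scal_I a b) by (auto; apply cont_m).
  apply (RInt_le_I a b); auto. apply (contI_scal a b), cont_m. lra.
  intros t Ht. assert (It : I t) by (apply (inI_conv a b u c); auto; lra).
  apply Rmult_le_compat_r. apply Rlt_le, m_pos; auto.
  generalize (RIs_le c Sc t Ic HSc It ltac:(lra)) (Rle_abs Sc). lra. Qed.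

Lemma K2a : lim_left a (fun u => Cb u / Mb u) ca.
Proof. intros P HP. destruct (band ca P Hca_nn HP) as [lo [Hi [Hsub [Hin Hmix]]]].
  destruct (ev_left_and a _ _ (Hca _ Hin) (ev_left_la a b x0 Hx0)) as [d [Hd Hd']].
  destruct (la_below a d Hd) as [c [Hcc Hc]]. destruct (Hd' c Hc Hcc) as [_ [_ Ic]].
  destruct (Hmix (Cb c) (Mb c)) as [W HW].
  generalize (ev_left_and a _ _ (ev_left_la a b x0 Hx0) (ev_left_and a _ _ (ev_left_lt a c Hc) (K1a c Ic _ (nbhd_pinf W)))).
  apply ev_left_mono. intros y [[Hy Iy] [Hyc HWy]].
  rewrite (Cb_shift y c), (Mb_shift y c) by auto.
  rewrite (Rplus_comm (RInt _ y c)), (Rplus_comm (RInt m y c)).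
  assert (Hpt : forall t, y < t < c -> lo <= c0 t /\ (forall hi, Hi hi -> c0 t <= hi)).
  { intros t Ht. destruct (Hd' t (la_mono a y t Hy ltac:(lra)) ltac:(lra)) as [[H1 H2] _].
    split; [lra|]. intros hi Hh; specialize (H2 hi Hh); lra. }
  apply HW; auto.
  - apply avg_lo; auto using cont_c0, cont_m, m_pos; [lra|]. intros t Ht; apply Hpt; auto.
  - intros hi Hh. apply avg_hi; auto using cont_c0, cont_m, m_pos; [lra|]. intros t Ht; apply Hpt; auto. Qed.


Lemma cont_h : contI a b (fun u => 2 * Mb u * s u).
Proof. apply (contI_mult a b (fun u => 2 * Mb u) s). apply (contI_scal a b), Mb_cont. apply cont_s. Qed.

Lemma K3a x : I x -> lim_left a (fun y => RInt (fun u => 2 * Mb u * s u) y x) Defs.p_infty.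
Proof. intros Ix. destruct (Hnata x Ix) as [_ HN].
  apply (lim_left_pinf_ge a _ _ 1 HN); [lra|].
  generalize (ev_left_and a _ _ (ev_left_la a b x0 Hx0) (ev_left_lt a x (proj1 Ix))). apply ev_left_mono.
  intros u [[Hu Iu] Hux].
  assert (HG : contI a b (fun eta => RI m eta x * s eta)).
  { apply (contI_mult a b); [|apply cont_s]. intros t It. apply (cont_RI_l a b); auto. apply cont_m. }
  rewrite (RI_RInt_I a b) by auto. rewrite Rmult_1_l.
  apply (RInt_le_I a b); auto. apply cont_h. lra.
  intros t Ht. assert (It : I t) by (apply (inI_conv a b u x); auto; lra).
  rewrite (RI_RInt_I a b) by (auto; apply cont_m).
  assert (H1 : 0 <= RInt m t x) by (apply (RInt_ge0_I a b); auto; [apply cont_m|lra|intros; apply Rlt_le, m_pos, (inI_conv a b t x); auto; lra]).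
  assert (H2 : RInt m t x <= 2 * Mb t) by (rewrite (Mb_shift t x) by auto; generalize (Mb_pos x Ix); lra).
  apply Rmult_le_compat_r; auto. apply Rlt_le, s_pos. Qed.

Lemma K3b x : I x -> lim_right b (fun z => RInt (fun u => 2 * Mb u * s u) x z) Defs.p_infty.
Proof. intros Ix. destruct (Hnatb x Ix) as [HS _].
  apply (lim_right_pinf_ge b _ _ 1 HS); [lra|].
  generalize (ev_right_and b _ _ (ev_right_rb a b x0 Hx0) (ev_right_gt b x (proj2 Ix))). apply ev_right_mono.
  intros v [[Hv Iv] Hxv].
  assert (Iseg : forall t, Rmin x v <= t <= Rmax x v -> I t).
  { intros t Ht. apply (inI_conv a b (Rmin x v) (Rmax x v)); auto; [apply I_min|apply I_max]; auto. }
  assert (HG : contI a b (fun eta => RI s x eta * m eta)).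
  { apply (contI_mult a b); [|apply cont_m]. intros t It. apply (cont_RI_r a b); auto. apply cont_s. }
  assert (HsM : contI a b (fun t => s t * Mb t)) by (apply (contI_mult a b); [apply cont_s|apply Mb_cont]).
  set (l := RInt (fun t => s t * Mb t) x v).
  assert (Hp : is_RInt (fun t => scal (RInt s x t) (opp (m t))) x v
     (minus (minus (scal (RInt s x v) (Mb v)) (scal (RInt s x x) (Mb x))) l)).
  { apply (@is_RInt_scal_derive_r R_CompleteNormedModule (fun t => RInt s x t) Mb s (fun t => opp (m t)) x v l).
    - intros t Ht. apply (derive_I a b); auto. apply cont_s.
    - intros t Ht. apply Mb_der; auto.
    - intros t Ht. apply cont_s; auto.
    - intros t Ht. apply (@continuous_opp R_UniformSpace R_AbsRing R_NormedModule m). apply cont_m; auto.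
    - apply (@RInt_correct R_CompleteNormedModule (fun t => s t * Mb t)). apply (exRInt_I a b); auto. }
  assert (E1 : RI (fun eta => RI s x eta * m eta) x v = - RInt (fun t => scal (RInt s x t) (opp (m t))) x v).
  { rewrite (RI_RInt_I a b) by auto.
    rewrite <- (@RInt_opp R_CompleteNormedModule) by (eexists; exact Hp).
    apply RInt_ext. intros t Ht. rewrite Rmin_left, Rmax_right in Ht by lra.
    assert (It : I t) by (apply (inI_conv a b x v); auto; lra).
    rewrite (RI_RInt_I a b) by (auto; apply cont_s). unfold scal, opp; simpl. unfold mult; simpl. ring. }
  rewrite (is_RInt_unique _ _ _ _ Hp) in E1.
  assert (E0 : RInt s x x = 0) by apply (@RInt_point R_CompleteNormedModule).
  rewrite E0 in E1.
  assert (E2 : RInt (fun u => 2 * Mb u * s u) x v = 2 * l).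
  { unfold l. rewrite <- (RInt_scal_I a b) by auto. apply RInt_ext. intros; req; ring. }
  rewrite E1, E2. unfold minus, plus, opp, scal, mult; simpl.
  assert (0 <= RInt s x v) by (apply (RInt_ge0_I a b); auto; [apply cont_s|lra|intros; apply Rlt_le, s_pos]).
  assert (0 <= l) by (apply (RInt_ge0_I a b); auto; [lra|intros t Ht; generalize (s_pos t) (Mb_pos t ltac:(apply (inI_conv a b x v); auto; lra)); nra]).
  generalize (Mb_pos v Iv). intros. change (- (RInt s x v * Mb v + - (0 * Mb x) + - l) <= 1 * (2 * l)).
  assert (0 <= RInt s x v * Mb v) by (apply Rmult_le_pos; lra). lra. Qed.


Lemma main_sec :
  let g := g0 mu sigma x0 b c0 in
  let zt := zeta mu sigma x0 b in
  (forall z, inI a b z ->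
     lim_left a (fun y => (g z - g y) / (zt z - zt y)) ca) /\
  (forall y, inI a b y ->
     lim_right b (fun z => (g z - g y) / (zt z - zt y)) cb) /\
  lim_left2 a (fun y z => (g z - g y) / (zt z - zt y)) ca /\
  lim_right2 b (fun y z => (g z - g y) / (zt z - zt y)) cb /\
  lim_left a (fun y => g y / zt y) ca /\
  lim_right b (fun z => g z / zt z) cb /\
  (Rbar_pos ca -> lim_left a g Defs.m_infty) /\
  (Rbar_pos cb -> lim_right b g Defs.p_infty).
Proof. intros g zt.
  set (f := fun u => Gb u * s u). set (h := fun u => 2 * Mb u * s u).
  assert (Hf : contI a b f) by (apply (contI_mult a b); [apply Gb_cont|apply cont_s]).
  assert (Hh : contI a b h) by apply cont_h.
  assert (hpos : forall x, I x -> 0 < h x).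
  { intros x Ix. unfold h. generalize (Mb_pos x Ix) (s_pos x). intros. nra. }
  assert (Hg : forall x, I x -> g x = RInt f x0 x).
  { intros x Ix. unfold g, g0. apply (RI_RInt_I a b); auto. }
  assert (Hz : forall x, I x -> zt x = RInt h x0 x).
  { intros x Ix. unfold zt, zeta. apply (RI_RInt_I a b); auto. }
  assert (Er : forall u, I u -> Cb u / Mb u = f u / h u).
  { intros u Iu. unfold f, h. rewrite Gb_eq by auto. generalize (Mb_pos u Iu) (s_pos u). intros. field. lra. }
  assert (Hra : lim_left a (fun u => f u / h u) ca).
  { apply (lim_left_ext a (fun u => Cb u / Mb u)); [|apply K2a].
    generalize (ev_left_la a b x0 Hx0). apply ev_left_mono. intros u [_ Iu]; auto. }
  assert (Hrb : lim_right b (fun u => f u / h u) cb).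
  { apply (lim_right_ext b (fun u => Cb u / Mb u)); [|apply K2b].
    generalize (ev_right_rb a b x0 Hx0). apply ev_right_mono. intros u [_ Iu]; auto. }
  assert (Hha : forall x, I x -> lim_left a (fun y => RInt h y x) Defs.p_infty) by (intros; apply K3a; auto).
  assert (Hhb : forall x, I x -> lim_right b (fun z => RInt h x z) Defs.p_infty) by (intros; apply K3b; auto).
  split; [|split; [|split; [|split; [|split; [|split; [|split]]]]]].
  - exact (claim1 a b x0 f h g zt ca Hx0 Hf Hh hpos Hg Hz Hra Hha Hca_nn).
  - exact (claim2 a b x0 f h g zt cb Hx0 Hf Hh hpos Hg Hz Hrb Hhb Hcb_nn).
  - exact (claim3 a b x0 f h g zt ca Hx0 Hf Hh hpos Hg Hz Hra Hca_nn).
  - exact (claim4 a b x0 f h g zt cb Hx0 Hf Hh hpos Hg Hz Hrb Hcb_nn).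
  - exact (claim5 a b x0 f h g zt ca Hx0 Hf Hh hpos Hg Hz Hra Hha Hca_nn).
  - exact (claim6 a b x0 f h g zt cb Hx0 Hf Hh hpos Hg Hz Hrb Hhb Hcb_nn).
  - exact (claim7 a b x0 f h g zt ca Hx0 Hf Hh hpos Hg Hz Hra Hha Hca_nn).
  - exact (claim8 a b x0 f h g zt cb Hx0 Hf Hh hpos Hg Hz Hrb Hhb Hcb_nn).
Qed.

End Diff.


Theorem lemma2p3 (a b : Rbar) (mu sigma c0 : R -> R) (x0 : R) (ca cb : Rbar)
  (* setting *)
  (Hab : Rbar_lt a b)
  (Hx0 : inI a b x0)
  (Hmu : forall x, inI a b x -> continuity_pt mu x)
  (Hsigma : forall x, inI a b x -> continuity_pt sigma x)
  (Hsigma0 : forall x, inI a b x -> sigma x <> 0)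
  (* a and b are natural boundaries *)
  (Hnata : natural_left mu sigma x0 a b)
  (Hnatb : natural_right mu sigma x0 a b)
  (* Condition A *)
  (HA1 : forall x, inI a b x ->
     exists L, lim_left a (fun u => RI (sdens mu sigma x0) u x) (Finite L))
  (HA2 : forall x, inI a b x ->
     lim_right b (fun v => RI (sdens mu sigma x0) x v) p_infty)
  (HA3 : forall y, inI a b y ->
     exists L, lim_right b (fun v => RI (mdens mu sigma x0) y v) (Finite L))
  (* Condition B(a) *)
  (Hc0 : forall x, inI a b x -> continuity_pt c0 x /\ 0 <= c0 x)
  (Hca : lim_left a c0 ca)
  (Hcb : lim_right b c0 cb)
  (Hca_nn : Rbar_nonneg ca)
  (Hcb_nn : Rbar_nonneg cb)
  (Hca_inf : a = m_infty -> ca = p_infty)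
  (Hcb_inf : b = p_infty -> cb = p_infty)
  (HB : forall y, inI a b y ->
     exists L, lim_right b
       (fun v => RI (fun t => c0 t * mdens mu sigma x0 t) y v) (Finite L)) :
  let g := g0 mu sigma x0 b c0 in
  let zt := zeta mu sigma x0 b in
  (forall z, inI a b z ->
     lim_left a (fun y => (g z - g y) / (zt z - zt y)) ca) /\
  (forall y, inI a b y ->
     lim_right b (fun z => (g z - g y) / (zt z - zt y)) cb) /\
  lim_left2 a (fun y z => (g z - g y) / (zt z - zt y)) ca /\
  lim_right2 b (fun y z => (g z - g y) / (zt z - zt y)) cb /\
  lim_left a (fun y => g y / zt y) ca /\
  lim_right b (fun z => g z / zt z) cb /\
  (Rbar_pos ca -> lim_left a g m_infty) /\
  (Rbar_pos cb -> lim_right b g p_infty).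
Proof.
  intros g zt. unfold g, zt.
  eapply main_sec; eauto.
Qed.
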